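(* Let $n\ge0$ and $f:[-1,1]\to\mathbb R$. Let $\boldsymbol\gamma:\mathbb Z\to\mathbb R$ be a real sequence supported in $\{0,1,\dots,n\}$, and write its NLFT as $\overbrace{\boldsymbol\gamma}(z)=\begin{pmatrix}a(z)&b(z)\\-b^*(z)&a^*(z)\end{pmatrix}$. Suppose $\operatorname{Re}\big[b(e^{2i\theta})e^{-in\theta}\big]=f(\cos\theta)$ for all $\theta\in[0,\pi]$. Let $\psi_k:=\arctan\gamma_k\in(-\frac\pi2,\frac\pi2)$ for $k=0,\dots,n$ and $\Psi=(\psi_0,\dots,\psi_n)$. Then $\operatorname{Im}\big(u_n(\Psi,x)\big)=f(x)$ for all $x\in[-1,1]$, where $u_n(\Psi,x)$ denotes the $(1,1)$ entry of $U_n(\Psi,x)$.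
   Context: $Z=\begin{pmatrix}1&0\\0&-1\end{pmatrix}$. For $x\in[-1,1]$, $W(x):=\begin{pmatrix}x& i\sqrt{1-x^2}\\ i\sqrt{1-x^2}&x\end{pmatrix}$ and $U_n(\Psi,x):=e^{i\psi_0 Z}\prod_{k=1}^n\big(W(x)e^{i\psi_k Z}\big)$ (factors ordered with increasing $k$ left to right). For a Laurent polynomial $a$, $a^*(z):=\overline{a(1/\overline z)}$. For a compactly supported $\boldsymbol\gamma:\mathbb Z\to\mathbb C$ supported in $[m,n']$, its NLFT is $\overbrace{\boldsymbol\gamma}(z):=\prod_{k=m}^{n'}\frac{1}{\sqrt{1+|\gamma_k|^2}}\begin{pmatrix}1&\gamma_k z^k\\-\overline{\gamma_k}z^{-k}&1\end{pmatrix}$ (ordered by increasing $k$ left to right); it always has the form $\begin{pmatrix}a&b\\-b^*&a^*\end{pmatrix}$ with $a,b$ Laurent polynomials. *)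

(* Defs.v *)
From mathcomp Require Import all_boot all_order all_algebra.
From mathcomp Require Import complex.
From mathcomp Require Import reals trigo.
Set Implicit Arguments. Unset Strict Implicit. Unset Printing Implicit Defensive.
Import Order.TTheory GRing.Theory Num.Theory.
Local Open Scope ring_scope.
Local Open Scope complex_scope.

Section QSP.
Variable R : realType.

Definition cexpi (t : R) : R[i] := cos t +i* sin t.

Definition expiZ (psi : R) : 'M[R[i]]_2 :=
  \matrix_(i < 2, j < 2)
    if i == j then (if i == 0 then cexpi psi else cexpi (- psi)) else 0.

Definition Wmx (x : R) : 'M[R[i]]_2 :=
  \matrix_(i < 2, j < 2)
    if i == j then x%:C else 0 +i* Num.sqrt (1 - x ^+ 2).

(* U_n(Psi, x) = e^{i psi_0 Z} prod_{k=1}^n (W(x) e^{i psi_k Z}),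
   factors with increasing k from left to right *)
Definition Umx (n : nat) (Psi : nat -> R) (x : R) : 'M[R[i]]_2 :=
  foldl (fun M k => M *m (Wmx x *m expiZ (Psi k))) (expiZ (Psi 0%N)) (iota 1 n).

(* One NLFT factor  (1+|g|^2)^{-1/2} [[1, g z^k], [-conj(g) z^{-k}, 1]] *)
Definition nlft_factor (g : R[i]) (k : int) (z : R[i]) : 'M[R[i]]_2 :=
  ((Num.sqrt (1 + (complex.Re g) ^+ 2 + (complex.Im g) ^+ 2))^-1)%:C *:
  \matrix_(i < 2, j < 2)
    if i == j then 1 else if i == 0 then g * z ^ k else - (g^* * z ^ (- k)).

(* NLFT of a sequence gamma : int -> R[i] supported in [m, m + len - 1],
   evaluated at a point z (z <> 0): the ordered product over k = m, ..., m+len-1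
   (increasing k from left to right). *)
Definition nlft (gamma : int -> R[i]) (m : int) (len : nat) (z : R[i])
  : 'M[R[i]]_2 :=
  foldl (fun M (j : nat) => M *m nlft_factor (gamma (m + j%:Z)) (m + j%:Z) z)
        1%:M (iota 0 len).

End QSP.

(* Main.v *)
Require Import Defs.
From mathcomp Require Import all_boot all_order all_algebra.
From mathcomp Require Import complex.
From mathcomp Require Import reals trigo.
From mathcomp Require Import ring lra.
Import Order.TTheory GRing.Theory Num.Theory.
Local Open Scope ring_scope.
Local Open Scope complex_scope.
Set Implicit Arguments. Unset Strict Implicit. Unset Printing Implicit Defensive.

Section S.
Variable R : realType.
Implicit Types A B : 'M[R[i]]_2.

Lemma mul2E A B i j : (A *m B) i j = A i 0 * B 0 j + A i 1 * B 1 j.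
Proof.
rewrite mxE !big_ord_recl big_ord0 addr0.
by have -> : lift ord0 ord0 = 1 :> 'I_2 by apply/val_inj.
Qed.
Lemma mx2P A B : A 0 0 = B 0 0 -> A 0 1 = B 0 1 -> A 1 0 = B 1 0 -> A 1 1 = B 1 1 -> A = B.
Proof.
move=> h00 h01 h10 h11; apply/matrixP => i j.
case: i => [[|[|//]] Hi]; case: j => [[|[|//]] Hj].
- have e1 : Ordinal Hi = 0 by apply/val_inj.
  have e2 : Ordinal Hj = 0 by apply/val_inj.
  by rewrite e1 e2.
- have e1 : Ordinal Hi = 0 by apply/val_inj.
  have e2 : Ordinal Hj = 1 by apply/val_inj.
  by rewrite e1 e2.
- have e1 : Ordinal Hi = 1 by apply/val_inj.
  have e2 : Ordinal Hj = 0 by apply/val_inj.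
  by rewrite e1 e2.
- have e1 : Ordinal Hi = 1 by apply/val_inj.
  have e2 : Ordinal Hj = 1 by apply/val_inj.
  by rewrite e1 e2.
Qed.

Lemma cmulE (a b c d : R) : (a +i* b) * (c +i* d) = (a*c - b*d) +i* (a*d + b*c).
Proof. by []. Qed.
Lemma caddE (a b c d : R) : (a +i* b) + (c +i* d) = (a+c) +i* (b+d).
Proof. by []. Qed.
Lemma coppE (a b : R) : - (a +i* b) = (-a) +i* (-b).
Proof. by []. Qed.
Lemma c0E : 0 = (0:R) +i* 0. Proof. by []. Qed.
Lemma c1E : 1 = (1:R) +i* 0. Proof. by []. Qed.
Lemma crealE (a : R) : a%:C = a +i* 0. Proof. by []. Qed.
Lemma cconjE (a b : R) : (a +i* b)^* = a +i* (- b).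
Proof. by []. Qed.

Ltac csimp := rewrite /cexpi ?crealE ?c0E ?c1E ?cosN ?sinN; rewrite ?(cmulE, caddE, coppE, cconjE);
  congr (_ +i* _); ring.

Lemma cexpiD (a b : R) : cexpi a * cexpi b = cexpi (a + b) :> R[i].
Proof. rewrite /cexpi cmulE cosD sinD; congr (_ +i* _); ring. Qed.
Lemma cexpi0 : cexpi 0 = 1 :> R[i].
Proof. by rewrite /cexpi cos0 sin0. Qed.
Lemma cexpiNK (a : R) : cexpi a * cexpi (- a) = 1.
Proof. by rewrite cexpiD subrr cexpi0. Qed.
Lemma cexpi_neq0 (a : R) : cexpi a != 0.
Proof. apply/eqP => h; have := cexpiNK a; rewrite h mul0r => /eqP; by rewrite eq_sym oner_eq0. Qed.
Lemma cexpiN (a : R) : cexpi (- a) = (cexpi a)^-1.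
Proof.
by rewrite -[LHS]mul1r -(mulVf (cexpi_neq0 a)) -mulrA cexpiNK mulr1.
Qed.
Lemma cexpiX (a : R) k : cexpi a ^+ k = cexpi (k%:R * a).
Proof.
elim: k => [|k IH]; first by rewrite expr0 mul0r cexpi0.
by rewrite exprS IH cexpiD -{1}[a]mul1r -mulrDl -natr1 addrC.
Qed.

Lemma expiZD (a b : R) : expiZ a *m expiZ b = expiZ (a + b).
Proof.
apply mx2P; rewrite !mul2E !mxE /= ?mulr0 ?mul0r ?addr0 ?add0r ?cexpiD //.
by rewrite opprD.
Qed.
Lemma expiZ0 : expiZ 0 = 1 :> 'M[R[i]]_2.
Proof. apply mx2P; rewrite !mxE /= ?oppr0 ?cexpi0 //. Qed.

Definition Vm : 'M[R[i]]_2 := \matrix_(i < 2, j < 2)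
  if i == 0 then 1 else (if j == 0 then 'i else - 'i).
Definition G0 (g : R) : 'M[R[i]]_2 := \matrix_(i < 2, j < 2)
  if i == j then (cos (atan g))%:C else if i == 0 then (sin (atan g))%:C
  else (- sin (atan g))%:C.

Lemma VW (t x : R) : cos t = x -> Num.sqrt (1 - x ^+ 2) = sin t ->
  Vm *m Wmx x = expiZ t *m Vm.
Proof.
move=> hc hs; apply mx2P; rewrite !mul2E !mxE /= hs -hc. all: rewrite /cexpi ?crealE ?c0E ?c1E; rewrite ?(cmulE, caddE, coppE, cconjE). all: rewrite ?cosN ?sinN; congr (_ +i* _); ring. Qed.

Lemma VE (g : R) : Vm *m expiZ (atan g) = G0 g *m Vm.
Proof. apply mx2P; rewrite !mul2E !mxE /= ?cosN ?sinN; csimp. Qed.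

Lemma conjR (g : R) : Num.conj (g%:C) = g%:C.
Proof. rewrite crealE; exact: (congr1 (fun y => g +i* y) (oppr0 R)). Qed.

Lemma crealM (a b : R) : (a * b)%:C = a%:C * b%:C.
Proof. rewrite !crealE cmulE; congr (_ +i* _); ring. Qed.
Lemma crealN (a : R) : (- a)%:C = - a%:C.
Proof. by rewrite !crealE coppE oppr0. Qed.

Lemma factorE (g t : R) (k : nat) :
  nlft_factor (g%:C) k%:Z (cexpi (2*t)) = expiZ (k%:R*t) *m G0 g *m expiZ (-(k%:R*t)).
Proof.
have hc : cos (atan g) = (Num.sqrt (1 + g^+2))^-1 := cos_atan g.
have cne : cos (atan g) != 0.
  by rewrite hc invr_eq0 sqrtr_eq0 -ltNge ltr_pwDl ?sqr_ge0.
have hs : sin (atan g) = g * cos (atan g).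
  by rewrite -[X in _ = X * _](atanK g) /tan mulfVK.
have hz : cexpi (2*t) ^ k%:Z = cexpi (k%:R*t) * cexpi (k%:R*t).
  by rewrite -exprnP cexpiX cexpiD; congr cexpi; ring.
have hzn : cexpi (2*t) ^ (- k%:Z) = (cexpi (k%:R*t) * cexpi (k%:R*t))^-1.
  by rewrite -invr_expz hz.
have une := cexpi_neq0 (k%:R * t).
apply mx2P; rewrite !mul2E !mxE /=.
all: rewrite ?conjR ?hz ?hzn ?opprK ?cexpiN expr0n /= addr0 -hc hs ?crealN ?crealM.
all: field; rewrite ?mulf_neq0 //.
Qed.

Lemma cconjN (a b : R) : Num.conj (a +i* b) = a +i* (- b).
Proof. by []. Qed.

Lemma Umx_S n Psi (x : R) : Umx n.+1 Psi x = Umx n Psi x *m (Wmx x *m expiZ (Psi n.+1)).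
Proof. by rewrite /Umx -[n.+1]addn1 iotaD foldl_cat add1n addn1. Qed.

Lemma nlft_S (gam : int -> R[i]) n z :
  nlft gam 0 n.+2 z = nlft gam 0 n.+1 z *m nlft_factor (gam (0 + n.+1%:Z)) (0 + n.+1%:Z) z.
Proof. by rewrite /nlft -[n.+2]addn1 iotaD foldl_cat add0n. Qed.

Lemma nlft_1 (gam : int -> R[i]) z :
  nlft gam 0 1 z = nlft_factor (gam 0) 0 z.
Proof. by rewrite /nlft /= mul1mx add0r. Qed.

Definition su (A : 'M[R[i]]_2) := A 1 0 = - Num.conj (A 0 1) /\ A 1 1 = Num.conj (A 0 0).

Lemma su_mul A B : su A -> su B -> su (A *m B).
Proof.
rewrite /su !mul2E. move=> [a1 a2] [b1 b2]. rewrite a1. rewrite a2. rewrite b1. rewrite b2.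
case: (A 0 0) => p1 p2; case: (A 0 1) => q1 q2; case: (B 0 0) => r1 r2; case: (B 0 1) => s1 s2.
split; rewrite ?(cmulE, caddE, coppE, cconjN); congr (_ +i* _); ring.
Qed.

Lemma su_expiZ (a : R) : su (expiZ a).
Proof. rewrite /su !mxE /= /cexpi cosN sinN c0E !cconjN; split; congr (_ +i* _); ring. Qed.

Lemma su_G0 (g : R) : su (G0 g).
Proof. rewrite /su !mxE /= !crealE !cconjN; split; congr (_ +i* _); ring. Qed.

Lemma su_factor (g t : R) (k : nat) : su (nlft_factor (g%:C) k%:Z (cexpi (2*t))).
Proof. rewrite factorE; apply: su_mul; first apply: su_mul; [exact: su_expiZ | exact: su_G0 | exact: su_expiZ]. Qed.

Lemma su_nlft (gamma : int -> R) (t : R) m :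
  su (nlft (fun k => (gamma k)%:C) 0 m.+1 (cexpi (2*t))).
Proof.
elim: m => [|m IH].
  by rewrite nlft_1; exact: (su_factor (gamma 0) t 0).
rewrite nlft_S; apply: su_mul => //=; rewrite add0r; exact: su_factor.
Qed.

Lemma mainV (gamma : int -> R) (t x : R) :
  cos t = x -> Num.sqrt (1 - x ^+ 2) = sin t -> forall m,
  Vm *m Umx m (fun k : nat => atan (gamma k%:Z)) x =
  nlft (fun k => (gamma k)%:C) 0 m.+1 (cexpi (2*t)) *m expiZ (m%:R*t) *m Vm.
Proof.
move=> hc hs; elim=> [|m IH].
  rewrite nlft_1 /Umx /= (factorE (gamma 0) t 0) !mul0r oppr0 expiZ0 mulmx1 mul1mx.
  by rewrite mulmx1 VE.
rewrite (Umx_S m) (nlft_S _ m) /= add0r (factorE (gamma m.+1) t m.+1).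
rewrite mulmxA IH -!mulmxA (mulmxA Vm (Wmx x)) (VW hc hs) -mulmxA VE.
rewrite (mulmxA (expiZ (m%:R * t))) expiZD.
rewrite (mulmxA (expiZ (- _))) expiZD addNr expiZ0 mul1mx.
by have -> : (m.+1)%:R * t = m%:R * t + t by rewrite -addn1 natrD mulrDl mul1r.
Qed.
End S.

Theorem theorem3p2 (R : realType) (n : nat) (f : R -> R) (gamma : int -> R) :
  (forall k : int, (k < 0)%R \/ (n%:Z < k)%R -> gamma k = 0) ->
  (forall theta : R, 0 <= theta <= pi ->
     complex.Re (nlft (fun k => (gamma k)%:C) 0 n.+1 (cexpi (2 * theta)) 0 1
         * cexpi (- (n%:R * theta))) = f (cos theta)) ->
  forall x : R, -1 <= x <= 1 ->
    complex.Im (Umx n (fun k : nat => atan (gamma k%:Z)) x 0 0) = f x.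
Proof.
move=> _ Hf x hx.
set t := acos x.
have hc : cos t = x by rewrite /t acosK // in_itv /=.
have hs : Num.sqrt (1 - x ^+ 2) = sin t by rewrite /t sin_acos.
have ht : 0 <= t <= pi by rewrite /t acos_ge0 ?acos_lepi.
have := Hf t ht; rewrite hc => <-.
have HV := mainV gamma hc hs n.
set N := nlft _ 0 n.+1 _ in HV *.
set U := Umx _ _ _ in HV *.
have hsu : su (N *m expiZ (n%:R * t)) by apply: su_mul; [exact: su_nlft | exact: su_expiZ].
have e01 : (N *m expiZ (n%:R * t)) 0 1 = N 0 1 * cexpi (- (n%:R * t)).
  by rewrite mul2E !mxE /= mulr0 add0r.
rewrite -e01.
set P := N *m expiZ (n%:R * t) in HV hsu e01 *.
clearbody P U.
have e00 := congr1 (fun M : 'M[R[i]]_2 => M 0 0) HV.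
have e10 := congr1 (fun M : 'M[R[i]]_2 => M 1 0) HV.
move: hsu e00 e10; rewrite /su /= !mul2E !mxE /= => -[-> ->].
case: (U 0 0) => a b; case: (U 1 0) => c d; case: (P 0 0) => p1 p2; case: (P 0 1) => q1 q2.
rewrite ?(cmulE, caddE, coppE, cconjN, c1E, c0E) /=.
move=> [h1 h2] [h3 h4].
lra.
Qed.
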